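(* For each $t\in\{0,1,\dots,T\}$ and $i\in\{1,\dots,N\}$, the function $(x,k)\mapsto\tilde V^{N,i}_t(x,k)$ on $\mathbb{N}_0^2$ is (i) non-decreasing in $x$ for each fixed $k$, and (ii) non-decreasing in $k$ for each fixed $x$.
   Context: Fix integers $N\ge1$, $T\ge1$, reals $\alpha_0,\beta_0>0$, and for each $i\in\{1,\dots,N\}$ an integer failure threshold $\xi_i\ge1$ and costs $0<c_p^i<c_u^i$. $\mathbb{N}_0=\{0,1,2,\dots\}$. For real $r>0$ and $p\in(0,1)$, $NB(r,p)$ is the distribution on $\mathbb{N}_0$ with $P(n)=\frac{\Gamma(n+r)}{\Gamma(r)n!}p^r(1-p)^n$; $NB(0,p)$ is the point mass at $0$. For $t\in\{0,\dots,T\}$ let $p_t=\frac{\beta_0+Nt}{\beta_0+Nt+1}$. Let $\mathbb{I}_i(x)=1$ if $x\ge\xi_i$, else $0$; $\mathcal{A}_i(x)=\{0,1\}$ if $x<\xi_i$ and $\{1\}$ if $x\ge\xi_i$ ($a=1$: replacement); $C_i(x,a)=a(1-\mathbb{I}_i(x))c_p^i+\mathbb{I}_i(x)c_u^i$. Define $\tilde V^{N,i}_T(x,k)=\mathbb{I}_i(x)c_u^i$ and for $t=T-1,\dots,0$: $\tilde V^{N,i}_t(x,k)=\min_{a\in\mathcal{A}_i(x)}\{C_i(x,a)+\mathbb{E}[\tilde V^{N,i}_{t+1}(x(1-a)+Z,\;k+Z+K)]\}$, where $Z\sim NB(\alpha_0+k,p_t)$ and $K\sim NB((N-1)(\alpha_0+k),p_t)$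 are independent. *)

(* Defs.v *)
From Stdlib Require Import Reals.
From Coquelicot Require Import Coquelicot.
Open Scope R_scope.

(* rising factorial r (r+1) ... (r+n-1) = Gamma(n+r)/Gamma(r); equals 1 for n=0,
   and for r = 0 it is 0 for every n >= 1 (so NB(0,p) is the point mass at 0). *)
Fixpoint rising (r : R) (n : nat) : R :=
  match n with
  | O => 1
  | S m => rising r m * (r + INR m)
  end.

Definition nb_pmf (r p : R) (n : nat) : R :=
  rising r n / INR (Factorial.fact n) * Rpower p r * (1 - p) ^ n.

Definition p_t (beta0 : R) (N t : nat) : R :=
  (beta0 + INR N * INR t) / (beta0 + INR N * INR t + 1).

Definition ind (xi x : nat) : R := if Nat.leb xi x then 1 else 0.

Definition cost (xi : nat) (cp cu : R) (x a : nat) : R :=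
  INR a * (1 - ind xi x) * cp + ind xi x * cu.

Definition expect2 (r1 r2 p : R) (f : nat -> nat -> R) : R :=
  Series (fun z => Series (fun m => nb_pmf r1 p z * nb_pmf r2 p m * f z m)).

(* Vrec j = value function at time t = T - j (j periods to go). *)
Fixpoint Vrec (N T : nat) (alpha0 beta0 : R) (xi : nat) (cp cu : R)
    (j : nat) : nat -> nat -> R :=
  match j with
  | O => fun x k => ind xi x * cu
  | S j' =>
      fun x k =>
        let t := (T - S j')%nat in
        let p := p_t beta0 N t in
        let r1 := alpha0 + INR k in
        let r2 := (INR N - 1) * (alpha0 + INR k) in
        let Q := fun a : nat =>
          cost xi cp cu x a +
          expect2 r1 r2 p
            (fun z m => Vrec N T alpha0 beta0 xi cp cu j'
                          (x * (1 - a) + z)%nat (k + z + m)%nat) in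
        (* A_i(x) = {0,1} if x < xi, {1} otherwise *)
        if Nat.ltb x xi then Rmin (Q 0%nat) (Q 1%nat) else Q 1%nat
  end.

Definition Vtilde (N T : nat) (alpha0 beta0 : R) (xi : nat) (cp cu : R)
    (t x k : nat) : R :=
  Vrec N T alpha0 beta0 xi cp cu (T - t) x k.

(* Main.v *)
Require Import Defs.
From Stdlib Require Import Reals Lra Lia.
From Coquelicot Require Import Coquelicot.
Open Scope R_scope.

Lemma rising_nonneg r n : 0 <= r -> 0 <= rising r n.
Proof.
  intros Hr; induction n as [|n IH]; simpl; [lra|].
  apply Rmult_le_pos; [exact IH|]. pose proof (pos_INR n); lra.
Qed.

Lemma rising_pos r n : 0 < r -> 0 < rising r n.
Proof.
  intros Hr; induction n as [|n IH]; simpl; [lra|].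
  apply Rmult_lt_0_compat; [exact IH|]. pose proof (pos_INR n); lra.
Qed.

Lemma rising_S r n : rising r (S n) = r * rising (r+1) n.
Proof.
  induction n as [|n IH].
  - simpl. ring.
  - change (rising r (S (S n))) with (rising r (S n) * (r + INR (S n))).
    rewrite IH. simpl. destruct n; simpl; ring.
Qed.

Lemma Rpower_pos p r : 0 < Rpower p r.
Proof. unfold Rpower; apply exp_pos. Qed.

Lemma fact_pos n : 0 < INR (Factorial.fact n).
Proof. apply lt_0_INR. apply Factorial.lt_O_fact. Qed.

Lemma nb_nonneg r p n : 0 <= r -> 0 < p < 1 -> 0 <= nb_pmf r p n.
Proof.
  intros Hr Hp. unfold nb_pmf.
  apply Rmult_le_pos; [apply Rmult_le_pos|].
  - unfold Rdiv; apply Rmult_le_pos; [apply rising_nonneg; auto|].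
    left; apply Rinv_0_lt_compat, fact_pos.
  - left; apply Rpower_pos.
  - apply pow_le; lra.
Qed.

Lemma nb_ex r p : 0 <= r -> 0 < p < 1 -> ex_series (nb_pmf r p).
Proof.
  intros Hr Hp. destruct Hr as [Hr|Hr].
  - apply ex_series_Rabs.
    apply ex_series_DAlembert with (k := 1 - p); [lra| |].
    + intros n. unfold nb_pmf.
      pose proof (rising_pos r n Hr). pose proof (fact_pos n).
      pose proof (Rpower_pos p r). pose proof (pow_lt (1-p) n ltac:(lra)).
      apply Rgt_not_eq. unfold Rdiv.
      repeat apply Rmult_lt_0_compat; auto. apply Rinv_0_lt_compat; auto.
    + apply is_lim_seq_ext with (u := fun n => (1 + (r - 1) * / INR (S n)) * (1 - p)).
      * intros n. unfold nb_pmf.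
        pose proof (rising_pos r n Hr). pose proof (fact_pos n).
        pose proof (Rpower_pos p r). pose proof (pow_lt (1-p) n ltac:(lra)).
        pose proof (lt_0_INR (S n) ltac:(lia)).
        change (rising r (S n)) with (rising r n * (r + INR n)).
        change (Factorial.fact (S n)) with (S n * Factorial.fact n)%nat.
        rewrite mult_INR. rewrite S_INR in *. simpl pow.
        assert (Hpos : 0 <= (1 + (r - 1) * / (INR n + 1)) * (1 - p)).
        { replace (1 + (r - 1) * / (INR n + 1)) with ((r + INR n) * / (INR n + 1)) by (field; lra).
          pose proof (pos_INR n). apply Rmult_le_pos; [|lra].
          apply Rmult_le_pos; [lra|left; apply Rinv_0_lt_compat; lra]. }
        rewrite <- (Rabs_right _ (Rle_ge _ _ Hpos)). f_equal.
        field. repeat split; lra.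
      * assert (H0 : is_lim_seq (fun n => / INR (S n)) 0).
        { change (Finite 0) with (Rbar_inv p_infty).
          apply is_lim_seq_inv; [|discriminate].
          apply (is_lim_seq_incr_1 INR p_infty). apply is_lim_seq_INR. }
        cut (is_lim_seq (fun n => (1 + (r - 1) * / INR (S n)) * (1 - p)) ((1 + (r-1)*0)*(1-p))).
        { replace ((1 + (r-1)*0)*(1-p)) with (1-p) by ring. auto. }
        apply is_lim_seq_mult'; [|apply is_lim_seq_const].
        apply is_lim_seq_plus'; [apply is_lim_seq_const|].
        apply is_lim_seq_mult'; [apply is_lim_seq_const|exact H0].
  - subst r. apply (ex_series_le (V:=R_CompleteNormedModule)) with (b := fun n => (1-p)^n).
    + intros n. rewrite <- (Rabs_right (nb_pmf 0 p n)) at 1 by (apply Rle_ge, nb_nonneg; lra).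
      change (norm (Rabs (nb_pmf 0 p n))) with (Rabs (Rabs (nb_pmf 0 p n))).
      rewrite Rabs_Rabsolu, Rabs_right by (apply Rle_ge, nb_nonneg; lra).
      unfold nb_pmf. rewrite Rpower_O by lra.
      destruct n as [|n].
      * simpl. lra.
      * rewrite rising_S. rewrite Rmult_0_l. unfold Rdiv. rewrite Rmult_0_l, Rmult_0_l, Rmult_0_l.
        apply pow_le; lra.
    + exists (/ (1 - (1-p))). apply is_series_geom. rewrite Rabs_right; lra.
Qed.

Definition E r p (g : nat -> R) := Series (fun n => nb_pmf r p n * g n).

Lemma ex_le_R (a b : nat -> R) : (forall n, 0 <= a n <= b n) -> ex_series b -> ex_series a.
Proof.
  intros H Hb. apply (ex_series_le (V:=R_CompleteNormedModule)) with (b := b); auto.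
  intros n. change (norm (a n)) with (Rabs (a n)). rewrite Rabs_right; [apply H|apply Rle_ge, H].
Qed.

Lemma ex_scal_R c (a : nat -> R) : ex_series a -> ex_series (fun n => c * a n).
Proof. intros H. apply (ex_series_scal_l c a H). Qed.

Lemma Series_nonneg' (a : nat -> R) : (forall n, 0 <= a n) -> ex_series a -> 0 <= Series a.
Proof.
  intros H Ha. assert (Series (fun _ => 0) <= Series a) by (apply Series_le; auto; intros; split; [lra|auto]).
  replace (Series (fun _ => 0)) with (0 * Series (fun _ => 0)) in H0.
  - lra.
  - rewrite <- Series_scal_l. apply Series_ext. intros; ring.
Qed.

Section E1.
Variables (p : R) (Hp : 0 < p < 1).

Lemma E_ex r B (Hr : 0 <= r) g : (forall n, 0 <= g n <= B) -> ex_series (fun n => nb_pmf r p n * g n).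
Proof.
  intros Hg. apply ex_le_R with (b := fun n => B * nb_pmf r p n).
  - intros n. pose proof (nb_nonneg r p n Hr Hp). specialize (Hg n).
    split; [apply Rmult_le_pos; lra|]. rewrite Rmult_comm. apply Rmult_le_compat_r; lra.
  - apply ex_scal_R, nb_ex; auto.
Qed.

Lemma E_bounds r B (Hr : 0 <= r) g : (forall n, 0 <= g n <= B) -> 0 <= E r p g <= B * Series (nb_pmf r p).
Proof.
  intros Hg. unfold E. split.
  - apply Series_nonneg'; [|apply (E_ex r B); auto].
    intros n. pose proof (nb_nonneg r p n Hr Hp). specialize (Hg n). apply Rmult_le_pos; lra.
  - rewrite <- Series_scal_l. apply Series_le.
    + intros n. pose proof (nb_nonneg r p n Hr Hp). specialize (Hg n).
      split; [apply Rmult_le_pos; lra|]. rewrite Rmult_comm. apply Rmult_le_compat_r; lra.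
    + apply ex_scal_R, nb_ex; auto.
Qed.

Lemma E_mono r B (Hr : 0 <= r) g g' : (forall n, 0 <= g n <= g' n) -> (forall n, g' n <= B) -> E r p g <= E r p g'.
Proof.
  intros H1 H2. unfold E. apply Series_le.
  - intros n. pose proof (nb_nonneg r p n Hr Hp). specialize (H1 n).
    split; [apply Rmult_le_pos; lra|]. apply Rmult_le_compat_l; lra.
  - apply (E_ex r B); auto. intros n; specialize (H1 n); specialize (H2 n); lra.
Qed.

Lemma nb_rec0 r : nb_pmf (r+1) p 0 = p * nb_pmf r p 0.
Proof.
  unfold nb_pmf. rewrite Rpower_plus, Rpower_1 by lra. simpl. field.
Qed.

Lemma nb_recS r n : nb_pmf (r+1) p (S n) = p * nb_pmf r p (S n) + (1 - p) * nb_pmf (r+1) p n.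
Proof.
  unfold nb_pmf. rewrite Rpower_plus, Rpower_1 by lra.
  rewrite (rising_S r n).
  change (Factorial.fact (S n)) with (S n * Factorial.fact n)%nat.
  rewrite mult_INR.
  change (rising (r+1) (S n)) with (rising (r+1) n * (r + 1 + INR n)).
  pose proof (fact_pos n). pose proof (lt_0_INR (S n) ltac:(lia)).
  rewrite S_INR in *. simpl pow.
  field. split; apply Rgt_not_eq; lra.
Qed.

Lemma E_split r B (Hr : 0 <= r) g : (forall n, 0 <= g n <= B) ->
  E (r+1) p g = p * E r p g + (1 - p) * Series (fun n => nb_pmf (r+1) p n * g (S n)).
Proof.
  intros Hg.
  assert (Hr1 : 0 <= r + 1) by lra.
  assert (Ec : ex_series (fun n => nb_pmf (r+1) p n * g n)) by (apply (E_ex (r+1) B); auto).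
  assert (Ea : ex_series (fun n => nb_pmf r p n * g n)) by (apply (E_ex r B); auto).
  assert (Ea1 : ex_series (fun n => nb_pmf r p (S n) * g (S n))) by (apply (ex_series_incr_1 (fun n => nb_pmf r p n * g n)); auto).
  assert (Ec1 : ex_series (fun n => nb_pmf (r+1) p n * g (S n))) by (apply (E_ex (r+1) B); auto).
  unfold E. rewrite (Series_incr_1 _ Ec), (Series_incr_1 _ Ea).
  rewrite (Series_ext _ (fun n => p * (nb_pmf r p (S n) * g (S n)) + (1 - p) * (nb_pmf (r+1) p n * g (S n)))).
  2:{ intros n. rewrite nb_recS. ring. }
  rewrite Series_plus by (apply ex_scal_R; auto).
  rewrite !Series_scal_l. rewrite nb_rec0. ring.
Qed.

Lemma E_dom r B (Hr : 0 <= r) g : (forall n, 0 <= g n <= B) -> (forall n, g n <= g (S n)) ->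
  E r p g <= E (r+1) p g.
Proof.
  intros Hg Hm.
  assert (Hr1 : 0 <= r + 1) by lra.
  pose proof (E_split r B Hr g Hg) as Hs.
  assert (Series (fun n => nb_pmf (r+1) p n * g n) <= Series (fun n => nb_pmf (r+1) p n * g (S n))).
  { apply Series_le.
    - intros n. pose proof (nb_nonneg (r+1) p n Hr1 Hp). pose proof (Hg n). pose proof (Hm n).
      split; [apply Rmult_le_pos; lra|]. apply Rmult_le_compat_l; lra.
    - apply (E_ex (r+1) B); auto. }
  unfold E in *. nra.
Qed.

Lemma mass_S r (Hr : 0 <= r) : Series (nb_pmf (r+1) p) = Series (nb_pmf r p).
Proof.
  pose proof (E_split r 1 Hr (fun _ => 1) ltac:(intros; lra)) as Hs.
  unfold E in Hs. simpl in Hs.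
  rewrite !(Series_ext (fun n => nb_pmf (r+1) p n * 1) (fun n => nb_pmf (r+1) p n)) in Hs by (intros; ring).
  rewrite !(Series_ext (fun n => nb_pmf r p n * 1) (fun n => nb_pmf r p n)) in Hs by (intros; ring).
  set (S1 := Series (nb_pmf (r+1) p)) in *. set (A1 := Series (nb_pmf r p)) in *.
  apply (Rmult_eq_reg_l p); [|lra].
  replace (p * S1) with (S1 - (1 - p) * S1) by ring. rewrite Hs at 1. ring.
Qed.

Lemma mass_INR r (Hr : 0 <= r) n : Series (nb_pmf (r + INR n) p) = Series (nb_pmf r p).
Proof.
  induction n as [|n IH].
  - simpl. rewrite Rplus_0_r. reflexivity.
  - rewrite S_INR, <- Rplus_assoc, mass_S; auto. pose proof (pos_INR n); lra.
Qed.

Lemma E_dom_INR r B (Hr : 0 <= r) g n : (forall n, 0 <= g n <= B) -> (forall n, g n <= g (S n)) ->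
  E r p g <= E (r + INR n) p g.
Proof.
  intros Hg Hm. induction n as [|n IH].
  - simpl. rewrite Rplus_0_r. lra.
  - rewrite S_INR, <- Rplus_assoc. eapply Rle_trans; [exact IH|].
    apply (E_dom _ B); auto. pose proof (pos_INR n); lra.
Qed.
End E1.

Section E2.
Variables (p : R) (Hp : 0 < p < 1).

Lemma E2_eq r1 r2 f : expect2 r1 r2 p f = E r1 p (fun z => E r2 p (f z)).
Proof.
  unfold expect2, E. apply Series_ext. intros z.
  rewrite <- Series_scal_l. apply Series_ext. intros m. ring.
Qed.

Lemma mass_nonneg r : 0 <= r -> 0 <= Series (nb_pmf r p).
Proof. intros Hr. apply Series_nonneg'; [intros; apply nb_nonneg; auto| apply nb_ex; auto]. Qed.

Lemma E2_bounds r1 r2 B f : 0 <= r1 -> 0 <= r2 -> (forall z m, 0 <= f z m <= B) ->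
  0 <= expect2 r1 r2 p f <= B * Series (nb_pmf r2 p) * Series (nb_pmf r1 p).
Proof.
  intros H1 H2 Hf. rewrite E2_eq. apply (E_bounds p Hp r1); auto.
  intros z. apply (E_bounds p Hp r2); auto.
Qed.

Lemma E2_mono r1 r2 B f f' : 0 <= r1 -> 0 <= r2 -> (forall z m, 0 <= f z m <= f' z m) ->
  (forall z m, f' z m <= B) -> expect2 r1 r2 p f <= expect2 r1 r2 p f'.
Proof.
  intros H1 H2 Hf Hf'. rewrite !E2_eq.
  apply (E_mono p Hp r1 (B * Series (nb_pmf r2 p))); auto.
  - intros z. split.
    + apply (E_bounds p Hp r2 B); auto. intros m; specialize (Hf z m); specialize (Hf' z m); lra.
    + apply (E_mono p Hp r2 B); auto.
  - intros z. apply (E_bounds p Hp r2 B); auto. intros m; specialize (Hf z m); specialize (Hf' z m); lra.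
Qed.

Lemma E2_dom1 r1 r2 B f n : 0 <= r1 -> 0 <= r2 -> (forall z m, 0 <= f z m <= B) ->
  (forall z m, f z m <= f (S z) m) -> expect2 r1 r2 p f <= expect2 (r1 + INR n) r2 p f.
Proof.
  intros H1 H2 Hf Hm. rewrite !E2_eq.
  apply (E_dom_INR p Hp r1 (B * Series (nb_pmf r2 p))); auto.
  - intros z. apply (E_bounds p Hp r2 B); auto.
  - intros z. apply (E_mono p Hp r2 B); auto.
    + intros m; split; [apply Hf|apply Hm].
    + intros m; apply Hf.
Qed.

Lemma E2_dom2 r1 r2 B f n : 0 <= r1 -> 0 <= r2 -> (forall z m, 0 <= f z m <= B) ->
  (forall z m, f z m <= f z (S m)) -> expect2 r1 r2 p f <= expect2 r1 (r2 + INR n) p f.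
Proof.
  intros H1 H2 Hf Hm. rewrite !E2_eq.
  assert (H2' : 0 <= r2 + INR n) by (pose proof (pos_INR n); lra).
  apply (E_mono p Hp r1 (B * Series (nb_pmf (r2 + INR n) p))); auto.
  - intros z. split.
    + apply (E_bounds p Hp r2 B); auto.
    + apply (E_dom_INR p Hp r2 B); auto.
  - intros z. apply (E_bounds p Hp (r2 + INR n) B); auto.
Qed.
End E2.

Lemma expect2_ext r1 r2 p f g : (forall z m, f z m = g z m) -> expect2 r1 r2 p f = expect2 r1 r2 p g.
Proof. intros H. unfold expect2. apply Series_ext. intros z. apply Series_ext. intros m. rewrite H. reflexivity. Qed.

Lemma Rmin_le_compat a b a' b' : a <= a' -> b <= b' -> Rmin a b <= Rmin a' b'.
Proof. intros. unfold Rmin. destruct (Rle_dec a b), (Rle_dec a' b'); lra. Qed.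

Section Main.
Variables (N T : nat) (alpha0 beta0 : R) (X : nat) (cP cU : R).
Hypotheses (HN : (1 <= N)%nat) (Ha : 0 < alpha0) (Hb : 0 < beta0) (Hc : 0 < cP < cU).

Let V := Vrec N T alpha0 beta0 X cP cU.

Lemma pt_bounds t : 0 < p_t beta0 N t < 1.
Proof.
  unfold p_t. pose proof (pos_INR N). pose proof (pos_INR t).
  assert (0 < beta0 + INR N * INR t) by nra.
  split.
  - apply Rdiv_lt_0_compat; lra.
  - apply (Rmult_lt_reg_r (beta0 + INR N * INR t + 1)); [lra|].
    unfold Rdiv. rewrite Rmult_assoc, Rinv_l by lra. lra.
Qed.

Lemma r2_eq k : (INR N - 1) * (alpha0 + INR k) = (INR N - 1) * alpha0 + INR ((N - 1) * k).
Proof. rewrite mult_INR, minus_INR by lia. simpl. ring. Qed.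

Lemma r2_nonneg k : 0 <= (INR N - 1) * (alpha0 + INR k).
Proof.
  apply Rmult_le_pos. 
  - apply le_INR in HN. simpl in HN. lra.
  - pose proof (pos_INR k); lra.
Qed.

Lemma r2_S k : (INR N - 1) * (alpha0 + INR (S k)) = (INR N - 1) * (alpha0 + INR k) + INR (N - 1).
Proof. rewrite minus_INR by lia. rewrite S_INR. simpl. ring. Qed.

Lemma cost_bounds x a : (a <= 1)%nat -> 0 <= cost X cP cU x a <= cU.
Proof.
  intros Ha1. destruct a as [|[|a]]; try lia; unfold cost, Defs.ind; destruct (Nat.leb X x); simpl; lra.
Qed.

Definition Prop_j j := (exists Bd, 0 <= Bd /\ forall x k, 0 <= V j x k <= Bd) /\
  (forall x x' k, (x <= x')%nat -> V j x k <= V j x' k) /\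
  (forall x k k', (k <= k')%nat -> V j x k <= V j x k').

Lemma main j : Prop_j j.
Proof.
  induction j as [|j [[Bd [HBd Hbd]] [Hx Hk]]].
  - unfold Prop_j, V. simpl. split; [|split].
    + exists cU. split; [lra|]. intros x k. unfold Defs.ind. destruct (Nat.leb X x); lra.
    + intros x x' k Hxx. unfold Defs.ind.
      destruct (Nat.leb_spec X x), (Nat.leb_spec X x'); try lia; lra.
    + intros; lra.
  - assert (Hmono : forall x x' k k', (x <= x')%nat -> (k <= k')%nat -> V j x k <= V j x' k').
    { intros x x' k k' H1 H2. eapply Rle_trans; [apply (Hx x x' k H1)|apply Hk; auto]. }
    set (t := (T - S j)%nat). set (p := p_t beta0 N t).
    assert (Hp : 0 < p < 1) by apply pt_bounds.
    set (M1 := Series (nb_pmf alpha0 p)). set (M2 := Series (nb_pmf ((INR N - 1)*alpha0) p)).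
    assert (HM1 : 0 <= M1) by (apply mass_nonneg; auto; lra).
    assert (HN0 : 0 <= INR N - 1) by (apply le_INR in HN; simpl in HN; lra).
    assert (HM2 : 0 <= M2) by (apply mass_nonneg; auto; nra).
    set (Q := fun a x k => cost X cP cU x a + expect2 (alpha0 + INR k) ((INR N - 1)*(alpha0+INR k)) p
                 (fun z m => V j (x*(1-a)+z)%nat (k+z+m)%nat)).
    assert (HV : forall x k, V (S j) x k = if Nat.ltb x X then Rmin (Q 0%nat x k) (Q 1%nat x k) else Q 1%nat x k)
      by reflexivity.
    assert (HE : forall a x k, 0 <= expect2 (alpha0 + INR k) ((INR N - 1)*(alpha0+INR k)) p
                 (fun z m => V j (x*(1-a)+z)%nat (k+z+m)%nat) <= Bd * M2 * M1).
    { intros a x k.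
      assert (Hr1 : 0 <= alpha0 + INR k) by (pose proof (pos_INR k); lra).
      pose proof (E2_bounds p Hp (alpha0 + INR k) ((INR N - 1)*(alpha0+INR k)) Bd
                 (fun z m => V j (x*(1-a)+z)%nat (k+z+m)%nat) Hr1 (r2_nonneg k) ltac:(intros; apply Hbd)) as HB.
      assert (E1 : Series (nb_pmf (alpha0 + INR k) p) = M1) by (apply mass_INR; auto; lra).
      assert (E2 : Series (nb_pmf ((INR N - 1)*(alpha0+INR k)) p) = M2) by (rewrite r2_eq; apply mass_INR; auto; nra).
      rewrite E1, E2 in HB. exact HB. }
    assert (HQ : forall a x k, (a <= 1)%nat -> 0 <= Q a x k <= cU + Bd * M2 * M1).
    { intros a x k Ha1. unfold Q. pose proof (cost_bounds x a Ha1). pose proof (HE a x k). lra. }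
    assert (HQ1 : forall x x' k, Q 1%nat x k - cost X cP cU x 1 = Q 1%nat x' k - cost X cP cU x' 1).
    { intros x x' k. unfold Q. 
      rewrite (expect2_ext _ _ _ _ (fun z m => V j z (k+z+m)%nat)) by (intros; rewrite Nat.sub_diag, Nat.mul_0_r; reflexivity).
      rewrite (expect2_ext _ _ _ (fun z m => V j (x'*(1-1)+z)%nat (k+z+m)%nat) (fun z m => V j z (k+z+m)%nat))
        by (intros; rewrite Nat.sub_diag, Nat.mul_0_r; reflexivity).
      ring. }
    assert (Hcost : forall x a, (a <= 1)%nat -> cost X cP cU x a = if Nat.ltb x X then INR a * cP else cU).
    { intros x a Ha1. unfold cost, Defs.ind.
      destruct (Nat.leb_spec X x), (Nat.ltb_spec x X); try lia;
      destruct a as [|[|a]]; try lia; simpl; try ring. }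
    unfold Prop_j. split; [|split].
    + exists (cU + Bd * M2 * M1). split; [pose proof (Rmult_le_pos _ _ (Rmult_le_pos _ _ HBd HM2) HM1); lra|].
      intros x k. rewrite HV. pose proof (HQ 0%nat x k ltac:(lia)). pose proof (HQ 1%nat x k ltac:(lia)).
      destruct (Nat.ltb x X); [|auto].
      unfold Rmin; destruct (Rle_dec (Q 0%nat x k) (Q 1%nat x k)); lra.
    + intros x x' k Hxx. rewrite !HV.
      pose proof (HQ1 x x' k) as Hq. rewrite !(Hcost _ 1%nat) in Hq by lia.
      destruct (Nat.ltb_spec x X), (Nat.ltb_spec x' X); try lia.
      * apply Rmin_le_compat; [|simpl in Hq; lra].
        unfold Q. rewrite !(Hcost _ 0%nat) by lia.
        destruct (Nat.ltb_spec x X), (Nat.ltb_spec x' X); try lia.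
        apply Rplus_le_compat_l. apply (E2_mono p Hp _ _ Bd).
        -- pose proof (pos_INR k); lra.
        -- apply r2_nonneg.
        -- intros z m. split; [apply Hbd|]. apply Hmono; nia.
        -- intros; apply Hbd.
      * eapply Rle_trans; [apply Rmin_r|]. simpl in Hq. lra.
      * lra.
    + assert (HS : forall x k, V (S j) x k <= V (S j) x (S k)).
      { intros x k. rewrite !HV.
        assert (HQS : forall a, (a <= 1)%nat -> Q a x k <= Q a x (S k)).
        { intros a Ha1. unfold Q. apply Rplus_le_compat_l.
          assert (Hr1 : 0 <= alpha0 + INR k) by (pose proof (pos_INR k); lra).
          eapply Rle_trans.
          { apply (E2_mono p Hp _ _ Bd _ (fun z m => V j (x*(1-a)+z)%nat (S k+z+m)%nat)); auto.
            - apply r2_nonneg.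
            - intros z m. split; [apply Hbd|]. apply Hk. lia.
            - intros; apply Hbd. }
          eapply Rle_trans.
          { apply (E2_dom1 p Hp _ _ Bd _ 1%nat); auto.
            - apply r2_nonneg.
            - intros z m. apply Hmono; nia. }
          eapply Rle_trans.
          { apply (E2_dom2 p Hp _ _ Bd _ (N - 1)%nat); auto.
            - pose proof (pos_INR 1); lra.
            - apply r2_nonneg.
            - intros z m. apply Hmono; nia. }
          rewrite r2_S. replace (alpha0 + INR (S k)) with (alpha0 + INR k + INR 1) by (rewrite (S_INR k); change (INR 1) with 1; ring).
          lra. }
        destruct (Nat.ltb x X).
        - apply Rmin_le_compat; apply HQS; lia.
        - apply HQS; lia. }
      intros x k k' Hkk. induction Hkk as [|k' Hkk IH]; [lra|].
      eapply Rle_trans; [exact IH|apply HS].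
Qed.
End Main.

Theorem proposition1
  (N T : nat) (alpha0 beta0 : R)
  (xi : nat -> nat) (cp cu : nat -> R)
  (HN : (1 <= N)%nat) (HT : (1 <= T)%nat)
  (Ha : 0 < alpha0) (Hb : 0 < beta0)
  (Hxi : forall i, (1 <= i <= N)%nat -> (1 <= xi i)%nat)
  (Hc : forall i, (1 <= i <= N)%nat -> 0 < cp i < cu i) :
  forall (t i : nat), (t <= T)%nat -> (1 <= i <= N)%nat ->
    (forall x x' k : nat, (x <= x')%nat ->
       Vtilde N T alpha0 beta0 (xi i) (cp i) (cu i) t x k
       <= Vtilde N T alpha0 beta0 (xi i) (cp i) (cu i) t x' k) /\
    (forall x k k' : nat, (k <= k')%nat ->
       Vtilde N T alpha0 beta0 (xi i) (cp i) (cu i) t x k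
       <= Vtilde N T alpha0 beta0 (xi i) (cp i) (cu i) t x k').
Proof.
  intros t i Ht Hi.
  destruct (main N T alpha0 beta0 (xi i) (cp i) (cu i) HN Ha Hb (Hc i Hi) (T - t)) as [_ [H1 H2]].
  unfold Vtilde. split; auto.
Qed.
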